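(* Let $V=\{1,\dots,p\}$ and let $F:2^V\to\mathbb{R}$ be submodular, nondecreasing, with $F(\varnothing)=0$ and $F(\{k\})>0$ for all $k\in V$. Let $\Omega(w)=f(|w|)$ where $f$ is the Lovász extension of $F$. For $J\subset V$, let $F_J:2^J\to\mathbb{R}$, $F_J(A)=F(A)$ (restriction), and $F^J:2^{J^c}\to\mathbb{R}$, $F^J(A)=F(A\cup J)-F(J)$ (contraction). Let $\Omega_J(u)=f_J(|u|)$ for $u\in\mathbb{R}^J$ and $\Omega^J(v)=f^J(|v|)$ for $v\in\mathbb{R}^{J^c}$, where $f_J,f^J$ are the Lovász extensions of $F_J,F^J$. Then: (i) for all $w\in\mathbb{R}^p$, $\Omega(w)\geqslant\Omega_J(w_J)+\Omega^J(w_{J^c})$; (ii) for all $w\in\mathbb{R}^p$, if $\min_{j\in J}|w_j|\geqslant\max_{j\in J^c}|w_j|$, then $\Omega(w)=\Omega_J(w_J)+\Omega^J(w_{J^c})$; (iii) $\Omega^J$ is a norm on $\mathbb{R}^{J^c}$ if and only if $J$ is a stable set.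
   Context: The Lovász extension of a set-function $G$ on a finite ground set $W$ is the function on $\mathbb{R}_+^W$ given, for $w$ with components ordered $w_{j_1}\geqslant\cdots\geqslant w_{j_m}\geqslant0$, by $\sum_{k=1}^m w_{j_k}[G(\{j_1,\dots,j_k\})-G(\{j_1,\dots,j_{k-1}\})]$. $|w|$ is the componentwise absolute value; $w_J$ is the subvector indexed by $J$; $J^c=V\setminus J$. A set $J\subset V$ is stable if every strict superset $B\supsetneq J$ satisfies $F(B)>F(J)$. *)

(* Defs.v *)
From HB Require Import structures.
From mathcomp Require Import all_boot all_order all_algebra.
Set Implicit Arguments. Unset Strict Implicit. Unset Printing Implicit Defensive.
Import Order.TTheory GRing.Theory Num.Theory.
Local Open Scope ring_scope.

Section Defs.
Variable R : realFieldType.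

(* The components are ordered decreasingly: s = [:: j_1; ...; j_m] with
   w j_1 >= ... >= w j_m (stable sort of enum W, so ties are broken by
   enumeration order), and
   f(w) = sum_k w_{j_k} (G {j_1..j_k} - G {j_1..j_{k-1}}). *)
Definition lovasz (W : finType) (G : {set W} -> R) (w : W -> R) : R :=
  let s := sort (fun x y => w y <= w x) (enum W) in
  \sum_(i <- s) w i * (G [set x in take (index i s).+1 s]
                       - G [set x in take (index i s) s]).

Definition submodular (T : finType) (F : {set T} -> R) : Prop :=
  forall A B : {set T}, F (A :|: B) + F (A :&: B) <= F A + F B.

Definition nondecreasing_set (T : finType) (F : {set T} -> R) : Prop :=
  forall A B : {set T}, A \subset B -> F A <= F B.

Definition stable (T : finType) (F : {set T} -> R) (J : {set T}) : Prop :=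
  forall B : {set T}, J \proper B -> F J < F B.

Definition restr (T : finType) (F : {set T} -> R) (J : {set T})
  : {set {x : T | x \in J}} -> R :=
  fun A => F [set val x | x in A].

Definition contr (T : finType) (F : {set T} -> R) (J : {set T})
  : {set {x : T | x \in ~: J}} -> R :=
  fun A => F ([set val x | x in A] :|: J) - F J.

Definition subvec (T : finType) (w : T -> R) (J : {set T})
  : {x : T | x \in J} -> R := fun x => w (val x).

Definition is_norm (I : finType) (N : (I -> R) -> R) : Prop :=
  [/\ forall x, 0 <= N x,
      forall x, N x = 0 -> x = (fun _ => 0),
      forall (a : R) x, N (fun i => a * x i) = `|a| * N x
    & forall x y, N (fun i => x i + y i) <= N x + N y].

End Defs.

Arguments restr {R T} F J _.
Arguments contr {R T} F J _.
Arguments subvec {R T} w J _.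

(* Main.v *)
Require Import Defs.
From HB Require Import structures.
From mathcomp Require Import all_boot all_order all_algebra.
From mathcomp Require Import ring lra.
From Stdlib Require Import FunctionalExtensionality.
Import Order.TTheory GRing.Theory Num.Theory.
Local Open Scope ring_scope.

Module Aux.
Set Implicit Arguments. Unset Strict Implicit. Unset Printing Implicit Defensive.


Section Gen.
Variable R : realFieldType.
Variable W : finType.
Implicit Types (G : {set W} -> R) (w u : W -> R) (s : seq W).

Definition gr G s i := G [set x in take (index i s).+1 s] - G [set x in take (index i s) s].
Definition Lo G w s := \sum_(i <- s) w i * gr G s i.
Definition sortw w := sort (fun x y : W => w y <= w x) (enum W).

Lemma lovaszE G w : lovasz G w = Lo G w (sortw w).
Proof. by []. Qed.

Lemma take_rcons_le n s x : (n <= size s)%N -> take n (rcons s x) = take n s.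
Proof. by move=> h; rewrite -cats1 takel_cat. Qed.

Lemma gr_rcons G s x i : i \in s -> gr G (rcons s x) i = gr G s i.
Proof.
move=> iS; have hi : (index i s < size s)%N by rewrite index_mem.
by rewrite /gr -cats1 index_cat iS !takel_cat // ltnW.
Qed.

Lemma gr_last G s x : x \notin s ->
  gr G (rcons s x) x = G [set y in rcons s x] - G [set y in s].
Proof.
move=> xs; rewrite /gr -cats1 index_cat (negbTE xs) /= eqxx addn0.
rewrite take_oversize ?size_cat ?addn1 //.
by rewrite takel_cat // take_size.
Qed.

Lemma Lo_rcons G w s x : x \notin s ->
  Lo G w (rcons s x) = Lo G w s + w x * (G [set y in rcons s x] - G [set y in s]).
Proof.
move=> xs; rewrite /Lo big_rcons /= gr_last //; congr (_ + _).
by apply: eq_big_seq => i iS; rewrite gr_rcons.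
Qed.

Lemma Lo_ext G1 G2 w s : (forall B, G1 B = G2 B) -> Lo G1 w s = Lo G2 w s.
Proof. by move=> h; apply: eq_bigr => i _; rewrite /gr !h. Qed.

Lemma set_nil : [set y in [::]] = set0 :> {set W}.
Proof. by apply/setP => y; rewrite !inE. Qed.

Lemma Lo_shift G w s c : G set0 = 0 -> uniq s ->
  Lo G (fun i => w i - c) s = Lo G w s - c * G [set y in s].
Proof.
move=> G0; elim/last_ind: s => [|s x IH].
  by rewrite /Lo !big_nil set_nil G0 mulr0 subr0.
rewrite rcons_uniq => /andP[xs us]; rewrite !Lo_rcons // IH //. ring.
Qed.

Lemma Abel G w u s : G set0 = 0 -> uniq s ->
  pairwise (fun x y => w y <= w x) s -> (forall i, i \in s -> 0 <= w i) ->
  (forall A : {set W}, \sum_(i in A) u i <= G A) ->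
  \sum_(i <- s) u i * w i <= Lo G w s.
Proof.
move=> G0 + + + uP; elim/last_ind: s w => [|s x IH] w.
  by move=> *; rewrite big_nil /Lo big_nil.
rewrite rcons_uniq => /andP[xs us].
rewrite -cats1 pairwise_cat => /and3P[hall hs _] hw.
set c := w x.
have hc : 0 <= c by apply: hw; rewrite mem_cat mem_head orbT.
have hws : forall i, i \in s -> c <= w i.
  by move=> i iS; move/allrelP: hall; apply => //; rewrite mem_head.
have IH' := IH (fun i => w i - c) us.
have := IH' _ _.
move=> {}IH'.
have IH2 : \sum_(i <- s) u i * (w i - c) <= Lo G w s - c * G [set y in s].
  rewrite -Lo_shift //; apply: IH'.
    by apply: sub_pairwise hs => a b /=; rewrite lerD2r.
  by move=> i iS; rewrite subr_ge0 hws.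
have e1 : \sum_(i <- s) u i * w i =
    \sum_(i <- s) u i * (w i - c) + c * \sum_(i <- s) u i.
  by rewrite mulr_sumr -big_split /=; apply: eq_bigr => i _; ring.
have e2 : \sum_(i <- s) u i + u x = \sum_(i in [set y in rcons s x]) u i.
  rewrite -big_rcons /= big_uniq ?rcons_uniq ?xs ?us //.
  by apply: eq_bigl => i; rewrite inE.
have hP := uP [set y in rcons s x].
rewrite -e2 in hP.
have hP2 := ler_wpM2l hc hP.
rewrite cats1 Lo_rcons // big_rcons /= e1 -/c.
rewrite mulrDr in hP2.
lra.
Qed.

Lemma gr_P G s : submodular G -> G set0 = 0 -> uniq s ->
  forall A : {set W}, A \subset [set y in s] -> \sum_(i in A) gr G s i <= G A.
Proof.
move=> Gs G0; elim/last_ind: s => [|s x IH].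
  move=> _ A; rewrite set_nil subset0 => /eqP ->; by rewrite big_set0 G0.
rewrite rcons_uniq => /andP[xs us] A hA.
have inS : forall i, i \in A -> i != x -> i \in s.
  move=> i iA ix; have := subsetP hA i iA.
  by rewrite inE mem_rcons in_cons (negbTE ix).
case: (boolP (x \in A)) => xA.
  rewrite (bigD1 x) //= gr_last //.
  have -> : \sum_(i in A | i != x) gr G (rcons s x) i = \sum_(i in A :\ x) gr G s i.
    rewrite (eq_bigl (fun i => i \in A :\ x)); last by move=> i; rewrite !inE andbC.
    apply: eq_bigr => i; rewrite !inE => /andP[ix iA]; rewrite gr_rcons //.
    exact: inS.
  have h1 := IH us (A :\ x).
  have h1' : \sum_(i in A :\ x) gr G s i <= G (A :\ x).
    apply: h1; apply/subsetP => i; rewrite !inE => /andP[ix iA]; exact: inS.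
  have h2 := Gs A [set y in s].
  have e3 : A :|: [set y in s] = [set y in rcons s x].
    apply/setP => i; rewrite !inE mem_rcons in_cons.
    case: (boolP (i == x)) => [/eqP -> | ix] /=; first by rewrite xA.
    by case: (boolP (i \in A)) => // iA; rewrite (inS i iA ix).
  have e4 : A :&: [set y in s] = A :\ x.
    apply/setP => i; rewrite !inE.
    case: (boolP (i == x)) => [/eqP -> | ix] /=; first by rewrite (negbTE xs) andbF.
    by case: (boolP (i \in A)) => // iA; rewrite (inS i iA ix).
  rewrite e3 e4 in h2.
  lra.
have -> : \sum_(i in A) gr G (rcons s x) i = \sum_(i in A) gr G s i.
  apply: eq_bigr => i iA; rewrite gr_rcons //; apply: inS => //.
  by apply: contraNneq xA => <-.
apply: IH => //; apply/subsetP => i iA; rewrite inE; apply: inS => //.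
by apply: contraNneq xA => <-.
Qed.

Lemma gr_ge0 G s i : nondecreasing_set G -> 0 <= gr G s i.
Proof.
move=> Gm; rewrite /gr subr_ge0; apply: Gm; apply/subsetP => y; rewrite !inE.
by rewrite -(take_takel s (leqnSn (index i s))); apply: mem_take.
Qed.

Lemma sortw_perm w : perm_eq (sortw w) (enum W).
Proof. by rewrite /sortw perm_sort. Qed.
Lemma sortw_uniq w : uniq (sortw w).
Proof. by rewrite sort_uniq enum_uniq. Qed.
Lemma sortw_pw w : pairwise (fun x y => w y <= w x) (sortw w).
Proof.
rewrite -sorted_pairwise; last by move=> a b c /= h1 h2; apply: le_trans h1.
by apply: sort_sorted => a b /=; apply: le_total.
Qed.
Lemma sortw_all w x : x \in sortw w.
Proof. by rewrite mem_sort mem_enum. Qed.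
Lemma set_sortw w : [set y in sortw w] = setT.
Proof. by apply/setP => y; rewrite !inE sortw_all. Qed.
Lemma sum_sortw w w' (f : W -> R) :
  \sum_(i <- sortw w) f i = \sum_(i <- sortw w') f i.
Proof.
apply: perm_big; apply: perm_trans (sortw_perm w) _; rewrite perm_sym.
exact: sortw_perm.
Qed.

Lemma grw_P G w : submodular G -> G set0 = 0 ->
  forall A : {set W}, \sum_(i in A) gr G (sortw w) i <= G A.
Proof.
move=> Gs G0 A; apply: gr_P => //; first exact: sortw_uniq.
by rewrite set_sortw subsetT.
Qed.

Lemma lov_ge G w u : G set0 = 0 -> (forall i, 0 <= w i) ->
  (forall A : {set W}, \sum_(i in A) u i <= G A) ->
  \sum_(i <- sortw w) u i * w i <= lovasz G w.
Proof.
move=> G0 hw uP; rewrite lovaszE; apply: Abel => //.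
- exact: sortw_uniq.
- exact: sortw_pw.
Qed.

Lemma lov_eq G w : lovasz G w = \sum_(i <- sortw w) gr G (sortw w) i * w i.
Proof. by rewrite lovaszE /Lo; apply: eq_bigr => i _; rewrite mulrC. Qed.

Lemma lov_ge0 G w : nondecreasing_set G -> (forall i, 0 <= w i) -> 0 <= lovasz G w.
Proof. by move=> Gm hw; rewrite lov_eq; apply: sumr_ge0 => i _; rewrite mulr_ge0 ?gr_ge0. Qed.

Lemma lov_sub G (x y : W -> R) : submodular G -> G set0 = 0 ->
  (forall i, 0 <= x i) -> (forall i, 0 <= y i) ->
  lovasz G (fun i => x i + y i) <= lovasz G x + lovasz G y.
Proof.
move=> Gs G0 hx hy; rewrite lov_eq.
set g := gr G _.
have -> : \sum_(i <- sortw (fun i => x i + y i)) g i * (x i + y i) =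
   \sum_(i <- sortw x) g i * x i + \sum_(i <- sortw y) g i * y i.
  rewrite (sum_sortw x (fun i => x i + y i)) (sum_sortw y (fun i => x i + y i)) -big_split /=.
  by apply: eq_bigr => i _; rewrite mulrDr.
apply: lerD; apply: lov_ge => //; exact: grw_P.
Qed.

Lemma lov_mono G (x y : W -> R) : submodular G -> G set0 = 0 -> nondecreasing_set G ->
  (forall i, 0 <= x i) -> (forall i, x i <= y i) ->
  lovasz G x <= lovasz G y.
Proof.
move=> Gs G0 Gm hx hxy; rewrite {1}lov_eq.
apply: le_trans (_ : \sum_(i <- sortw y) gr G (sortw x) i * y i <= _).
  rewrite (sum_sortw y x); apply: ler_sum => i _.
  by apply: ler_wpM2l; rewrite ?gr_ge0.
apply: lov_ge => //; last exact: grw_P.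
by move=> i; apply: le_trans (hx i) (hxy i).
Qed.

Lemma lov_hom G (x : W -> R) (c : R) : submodular G -> G set0 = 0 ->
  (forall i, 0 <= x i) -> 0 <= c ->
  lovasz G (fun i => c * x i) = c * lovasz G x.
Proof.
move=> Gs G0 hx hc; have hcx : forall i, 0 <= c * x i by move=> i; rewrite mulr_ge0.
apply/le_anti/andP; split.
  rewrite lov_eq (sum_sortw _ x).
  rewrite (_ : \sum_(i <- sortw x) _ =
     c * \sum_(i <- sortw x) gr G (sortw (fun i => c * x i)) i * x i); last first.
    by rewrite mulr_sumr; apply: eq_bigr => i _; rewrite mulrCA.
  apply: ler_wpM2l => //; apply: lov_ge => //; exact: grw_P.
rewrite lov_eq.
rewrite (_ : c * _ = \sum_(i <- sortw (fun i => c * x i)) gr G (sortw x) i * (c * x i)).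
  apply: lov_ge => //; exact: grw_P.
rewrite mulr_sumr (sum_sortw _ (fun i => c * x i)).
by apply: eq_bigr => i _; rewrite mulrCA.
Qed.

End Gen.

Section Maps.
Variable R : realFieldType.

Lemma Lo_cat (W : finType) (G : {set W} -> R) w s r : uniq (s ++ r) ->
  Lo G w (s ++ r) = Lo G w s + Lo (fun B => G ([set y in s] :|: B) - G [set y in s]) w r.
Proof.
elim/last_ind: r => [|r x IH].
  by rewrite cats0 /Lo big_nil addr0.
rewrite -rcons_cat rcons_uniq => /andP[xs us].
have xr : x \notin r by apply: contra xs; rewrite mem_cat orbC => ->.
rewrite !Lo_rcons // IH //.
have -> : [set y in s] :|: [set y in rcons r x] = [set y in rcons (s ++ r) x].
  by apply/setP => y; rewrite !inE !mem_rcons !in_cons mem_cat; case: (y == x); rewrite ?orbT.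
have -> : [set y in s] :|: [set y in r] = [set y in s ++ r].
  by apply/setP => y; rewrite !inE mem_cat.
ring.
Qed.

Lemma Lo_map (W W' : finType) (f : W' -> W) (finj : injective f) (G : {set W} -> R) w
  (s : seq W') : uniq s ->
  Lo G w (map f s) = Lo (fun B => G (f @: B)) (fun i => w (f i)) s.
Proof.
elim/last_ind: s => [|s x IH]; first by rewrite /Lo !big_nil.
rewrite rcons_uniq => /andP[xs us].
rewrite map_rcons !Lo_rcons ?(mem_map finj) // IH //.
have e : forall t : seq W', [set y in map f t] = f @: [set y in t].
  move=> t; apply/setP => y; rewrite inE; apply/idP/imsetP.
    by case/mapP => z zt ->; exists z; rewrite ?inE.
  by case=> z; rewrite inE => zt ->; apply: map_f.
by rewrite -map_rcons !e.
Qed.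

End Maps.


Section Main.
Variable R : realFieldType.
Variable p : nat.
Variable F : {set 'I_p} -> R.
Variable J : {set 'I_p}.
Hypothesis Fsub : submodular F.
Hypothesis Fmon : nondecreasing_set F.
Hypothesis F0 : F set0 = 0.

Lemma val_injin (P : pred 'I_p) (A B : {set {x : 'I_p | P x}}) :
  {in A & B, injective (val : {x : 'I_p | P x} -> 'I_p)}.
Proof. by move=> a b _ _; apply: val_inj. Qed.

Lemma restr_sub : submodular (restr F J).
Proof.
move=> A B; rewrite /restr imsetU imsetI; last exact: val_injin.
exact: Fsub.
Qed.

Lemma restr0 : restr F J set0 = 0.
Proof. by rewrite /restr imset0. Qed.

Lemma contr_sub : submodular (contr F J).
Proof.
move=> A B; rewrite /contr imsetU imsetI; last exact: val_injin.
have := Fsub ([set val x | x in A] :|: J) ([set val x | x in B] :|: J).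
rewrite setUACA setUid -setUIl. lra.
Qed.

Lemma contr_mono : nondecreasing_set (contr F J).
Proof.
move=> A B AB; rewrite /contr lerD2r; apply: Fmon.
by apply: setSU; apply: imsetS.
Qed.

Lemma contr0 : contr F J set0 = 0.
Proof. by rewrite /contr imset0 set0U subrr. Qed.

Definition tw (w : 'I_p -> R) : seq 'I_p :=
  map val (sortw (fun i : {x : 'I_p | x \in J} => `|w (val i)|)) ++
  map val (sortw (fun i : {x : 'I_p | x \in ~: J} => `|w (val i)|)).

Lemma tw_uniq w : uniq (tw w).
Proof.
rewrite /tw cat_uniq !(map_inj_uniq val_inj) !sortw_uniq /= andbT.
apply/hasPn => y /mapP[b _ ->]; apply/mapP => -[a _ e].
have hb := valP b; have ha := valP a; rewrite /= e inE in hb.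
by rewrite ha in hb.
Qed.

Lemma tw_all w x : x \in tw w.
Proof.
rewrite /tw mem_cat; case: (boolP (x \in J)) => h.
  by apply/orP; left; apply/mapP; exists (exist _ x h) => //; apply: sortw_all.
have h' : x \in ~: J by rewrite inE.
by apply/orP; right; apply/mapP; exists (exist _ x h') => //; apply: sortw_all.
Qed.

Lemma tw_perm w : perm_eq (tw w) (enum 'I_p).
Proof.
apply: uniq_perm; [exact: tw_uniq | exact: enum_uniq |].
by move=> x; rewrite mem_enum tw_all.
Qed.

Lemma tw_E w : Lo F (fun i => `|w i|) (tw w) =
  lovasz (restr F J) (fun i => `|subvec w J i|) +
  lovasz (contr F J) (fun i => `|subvec w (~: J) i|).
Proof.
rewrite /tw Lo_cat ?(tw_uniq w) // !Lo_map ?sortw_uniq //; try exact: val_inj.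
rewrite !lovaszE.
have eJ : [set y in map val (sortw (fun i : {x : 'I_p | x \in J} => `|w (val i)|))] = J.
  apply/setP => y; rewrite inE; apply/idP/idP.
    by case/mapP => a _ ->; apply: valP.
  by move=> h; apply/mapP; exists (exist _ y h) => //; apply: sortw_all.
rewrite eJ; congr (_ + _); apply: Lo_ext => B //.
by rewrite /contr setUC.
Qed.

End Main.

End Aux.
Import Aux.


Theorem proposition4 (R : realFieldType) (p : nat) (F : {set 'I_p} -> R)
  (Fsub : submodular F) (Fmon : nondecreasing_set F) (F0 : F set0 = 0)
  (Fpos : forall k : 'I_p, 0 < F [set k]) (J : {set 'I_p}) :
  let Omega := fun w : 'I_p -> R => lovasz F (fun i => `|w i|) in
  let Omega_J := fun u : {x : 'I_p | x \in J} -> R =>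
                   @lovasz R _ (restr F J) (fun i => `|u i|) in
  let Omega_upJ := fun v : {x : 'I_p | x \in ~: J} -> R =>
                   @lovasz R _ (contr F J) (fun i => `|v i|) in
  [/\ (forall w : 'I_p -> R,
         Omega_J (subvec w J) + Omega_upJ (subvec w (~: J)) <= Omega w),
      (forall w : 'I_p -> R,
         (forall j k : 'I_p, j \in J -> k \in ~: J -> `|w k| <= `|w j|) ->
         Omega w = Omega_J (subvec w J) + Omega_upJ (subvec w (~: J)))
    & (is_norm Omega_upJ <-> stable F J)].
Proof.
move=> Omega Omega_J Omega_upJ.
have hperm : forall w : 'I_p -> R,
    perm_eq (tw J w) (sortw (fun i => `|w i|)).
  move=> w; apply: perm_trans (tw_perm J w) _; rewrite perm_sym; exact: sortw_perm.
have part1 : forall w : 'I_p -> R,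
    Omega_J (subvec w J) + Omega_upJ (subvec w (~: J)) <= Omega w.
  move=> w; rewrite /Omega_J /Omega_upJ -tw_E /Lo (perm_big _ (hperm w)) /=.
  under eq_bigr => i _ do rewrite mulrC.
  apply: lov_ge => // A; apply: gr_P => //; first exact: tw_uniq.
  by apply/subsetP => x _; rewrite inE tw_all.
split => //.
  move=> w hw; apply/le_anti/andP; split; last exact: part1.
  rewrite /Omega_J /Omega_upJ -tw_E /Omega lov_eq.
  rewrite -(perm_big _ (hperm w)) /=.
  apply: Abel => //.
  - exact: tw_uniq.
  - rewrite /tw pairwise_cat !pairwise_map; apply/and3P; split.
    + apply/allrelP => x y /mapP[a _ ->] /mapP[b _ ->]; apply: hw; exact: valP.
    + exact: sortw_pw.
    + exact: sortw_pw.
  - exact: (grw_P _ Fsub F0).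
set G := contr F J.
have Gs : submodular G by exact: contr_sub.
have Gm : nondecreasing_set G by exact: contr_mono.
have G0 : G set0 = 0 by exact: contr0.
split.
- move=> [N0 Ndef Nhom Ntri] B JB.
  rewrite ltNge; apply/negP => hB.
  case/properP: JB => JsB [x xB xJ].
  have xJc : x \in ~: J by rewrite inE.
  pose v := fun i : {x : 'I_p | x \in ~: J} => if val i \in B then 1 else 0 : R.
  have hv : Omega_upJ v = 0.
    apply/le_anti/andP; split; last by apply: lov_ge0 => // i.
    rewrite /Omega_upJ lov_eq (perm_big _ (sortw_perm _)) big_enum /=.
    rewrite (eq_bigr (fun i => if val i \in B then gr G (sortw (fun i => `|v i|)) i else 0));
      last by move=> i _; rewrite /v; case: (val i \in B); rewrite ?normr1 ?normr0 ?mulr1 ?mulr0.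
    rewrite -big_mkcondr /=.
    set C := [set i : {x : 'I_p | x \in ~: J} | val i \in B].
    rewrite (eq_bigl (fun i => i \in C)); last by move=> i; rewrite inE.
    apply: le_trans (grw_P _ Gs G0 C) _.
    rewrite /G /contr subr_le0.
    have -> : [set val x | x in C] :|: J = B.
      apply/setP => y; rewrite !inE; apply/idP/idP.
        case/orP; last by apply: (subsetP JsB).
        by case/imsetP => z; rewrite inE => zB ->.
      move=> yB; case: (boolP (y \in J)) => yJ; first by rewrite orbT.
      have yJc : y \in ~: J by rewrite inE.
      apply/orP; left; apply/imsetP; exists (exist _ y yJc) => //.
      by rewrite inE.
    exact: hB.
  have := Ndef v hv => /(congr1 (fun f => f (exist _ x xJc))).
  by rewrite /v /= xB => /eqP; rewrite oner_eq0.
- move=> hst.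
  have hnn : forall v : {x : 'I_p | x \in ~: J} -> R, forall i, 0 <= `|v i| by [].
  split.
  + by move=> v; apply: lov_ge0.
  + move=> v hv; apply: functional_extensionality => i0.
    apply/eqP; apply: contraT => hi0.
    set c := G [set i0].
    have hc : 0 < c.
      rewrite /c /G /contr subr_gt0; apply: hst; apply/properP; split.
        exact: subsetUr.
      exists (val i0); first by rewrite !inE; apply/orP; left; apply/imsetP; exists i0; rewrite ?inE.
      by have := valP i0; rewrite inE.
    pose u := fun i => if i == i0 then c else 0.
    have uP : forall A : {set {x : 'I_p | x \in ~: J}}, \sum_(i in A) u i <= G A.
      move=> A; rewrite /u -big_mkcondr /=.
      case: (boolP (i0 \in A)) => hA.
        rewrite (eq_bigl (fun i => i == i0)); last first.
          by move=> i; case: (boolP (i == i0)) => [/eqP -> | _]; rewrite ?hA ?andbF.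
        rewrite big_pred1_eq; apply: Gm; by rewrite sub1set.
      rewrite big_pred0; last first.
        by move=> i; case: (boolP (i == i0)) => [/eqP -> | _]; rewrite ?(negbTE hA) ?andbF.
      by rewrite -G0; apply: Gm; apply: sub0set.
    have := lov_ge G0 (hnn v) uP.
    rewrite (perm_big _ (sortw_perm _)) big_enum /=.
    rewrite (eq_bigr (fun i => if i == i0 then c * `|v i| else 0)); last first.
      by move=> i _; rewrite /u; case: (i == i0); rewrite ?mul0r.
    rewrite -big_mkcond big_pred1_eq.
    move: hv; rewrite /Omega_upJ => ->.
    have : 0 < c * `|v i0| by rewrite mulr_gt0 // normr_gt0.
    lra.
  + move=> a v; rewrite /Omega_upJ.
    have -> : (fun i => `|a * v i|) = (fun i => `|a| * `|v i|).
      by apply: functional_extensionality => i; rewrite normrM.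
    by apply: lov_hom.
  + move=> x y; rewrite /Omega_upJ.
    apply: le_trans (lov_sub Gs G0 (hnn x) (hnn y)).
    apply: lov_mono => // i; exact: ler_normD.
Qed.
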